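(* Assume $D=\sum_{k=1}^K N_k$ (i.e. $\sum_k N_k\le N_T$). Let $\mathcal G$ be a graph on $N_I$ vertices for which there exists a permutation matrix $\mathbf P$ with $\mathbf A_{\mathcal G}=\mathbf P\bar{\mathbf A}_{\mathcal G}\mathbf P^T$ and $\sum_{m=n+1}^{N_I}\bar{\mathbf A}_{\mathcal G}(n,m)=\min\{2L-1,N_I-n\}$ for $1\le n\le N_I-1$. Then $$\mathcal U_{\mathrm{fully}}=\mathcal U_{\mathcal G}\cup\mathcal N_{\mathcal U}.$$ Consequently $\mathcal H_{\mathrm{fully}}=\mathcal H_{\mathcal G}\cup\mathcal N$, where $\mathcal H_{\mathrm{fully}}=\{\mathbf H_d+\mathbf U^H\mathbf G:\mathbf U\in\mathcal U_{\mathrm{fully}}\}$, $\mathcal H_{\mathcal G}=\{\mathbf H_d+\mathbf U^H\mathbf G:\mathbf U\in\mathcal U_{\mathcal G}\}$ and $\mathcal N=\{\mathbf H_d+\mathbf U^H\mathbf G:\mathbf U\in\mathcal N_{\mathcal U}\}$.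
   Context: Let $N_I,N_T,K\ge1$, $N_1,\dots,N_K\ge1$ be integers, $Z_0>0$, and let $\mathbf H_{d,k}\in\mathbb C^{N_k\times N_T}$, $\mathbf H_{r,k}\in\mathbb C^{N_k\times N_I}$, $\mathbf G\in\mathbb C^{N_I\times N_T}$ be given. Let $\mathbf H_d$ and $\mathbf H_r\in\mathbb C^{(\sum_k N_k)\times N_I}$ be the vertical stackings of the $\mathbf H_{d,k}$ and of the $\mathbf H_{r,k}$, respectively. $D=\min\{\sum_k N_k,N_T\}$, $L=\min\{D,N_I/2\}$. A graph $\mathcal G=(\mathcal V,\mathcal E)$ is a simple undirected graph with vertices $V_1,\dots,V_{N_I}$; its adjacency matrix $\mathbf A_{\mathcal G}$ is the symmetric $0$–$1$ matrix with zero diagonal and $\mathbf A_{\mathcal G}(n,m)=1$ iff $(V_n,V_m)\in\mathcal E$; $\mathcal B_{\mathcal G}=\{\mathbf B\in\mathbb R^{N_I\times N_I}: B_{n,m}=0\ \forall n\ne m \text{ with }(V_n,V_m)\notin\mathcal E\}$. Define $\mathcal U_{\mathrm{fully}}=\{(\mathbf H_r\boldsymbol\Theta)^H : \boldsymbol\Theta=(\mathbf I+\mathsf iZ_0\mathbf B)^{-1}(\mathbf I-\mathsf iZ_0\mathbf B),\ \mathbf B\in\mathbb R^{N_I\times N_I},\ \mathbf B=\mathbf B^T\}$ and $\mathcal U_{\mathcal G}$ the same set with the additional constraint $\mathbf B\in\mathcal B_{\mathcal G}$. For $\mathbf U\in\mathbb C^{N_I\times\sum_k N_k}$ let $\mathbf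 M_{\mathbf U}=[\mathcal R(\mathsf iZ_0(\mathbf H_r^H+\mathbf U))\ \ \mathcal I(\mathsf iZ_0(\mathbf H_r^H+\mathbf U))]\in\mathbb R^{N_I\times 2\sum_k N_k}$, where $\mathcal R,\mathcal I$ denote entrywise real and imaginary parts, and let $\mathcal N_{\mathcal U}=\{\mathbf U\in\mathcal U_{\mathrm{fully}}:\ \mathbf M_{\mathbf U}\text{ has a singular } n\times n \text{ submatrix for some } n\le 2\sum_k N_k\}$. *)

(* Defs.v *)
From HB Require Import structures.
From mathcomp Require Import all_boot all_order all_fingroup all_algebra.
From mathcomp Require Import reals.
From mathcomp.real_closed Require Import complex.
Set Implicit Arguments. Unset Strict Implicit. Unset Printing Implicit Defensive.
Import Order.TTheory GRing.Theory Num.Theory.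
Local Open Scope ring_scope.

Section RISDefs.
Variable R : realType.
Local Notation C := R[i].

Definition conjT m n (A : 'M[C]_(m, n)) : 'M[C]_(n, m) := (map_mx (@conjc R) A)^T.

Definition cplx_mx m n (A : 'M[R]_(m, n)) : 'M[C]_(m, n) := map_mx (fun x => x%:C%C) A.

Definition Theta NI (Z0 : R) (B : 'M[R]_NI) : 'M[C]_NI :=
  invmx (1%:M + ('i%C * Z0%:C%C) *: cplx_mx B) *m (1%:M - ('i%C * Z0%:C%C) *: cplx_mx B).

Definition stack K (N : 'I_K -> nat) p (H : forall k : 'I_K, 'M[C]_(N k, p))
  : 'M[C]_(\sum_(k < K) N k, p) := \mxcol_(k < K) H k.

Definition in_BG NI (e : rel 'I_NI) (B : 'M[R]_NI) : Prop :=
  forall n m : 'I_NI, n != m -> ~~ e n m -> B n m = 0.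

(* adjacency matrix of the graph given by the (symmetric, irreflexive) relation e *)
Definition adjmx NI (e : rel 'I_NI) : 'M[R]_NI := \matrix_(n, m) (e n m)%:R.

Definition U_fully NI S (Z0 : R) (Hr : 'M[C]_(S, NI)) (U : 'M[C]_(NI, S)) : Prop :=
  exists B : 'M[R]_NI, B^T = B /\ U = conjT (Hr *m Theta Z0 B).

Definition U_G NI S (e : rel 'I_NI) (Z0 : R) (Hr : 'M[C]_(S, NI)) (U : 'M[C]_(NI, S)) : Prop :=
  exists B : 'M[R]_NI, B^T = B /\ in_BG e B /\ U = conjT (Hr *m Theta Z0 B).

Definition M_U NI S (Z0 : R) (Hr : 'M[C]_(S, NI)) (U : 'M[C]_(NI, S)) : 'M[R]_(NI, S + S) :=
  let X := ('i%C * Z0%:C%C) *: (conjT Hr + U) in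
  row_mx (map_mx (@complex.Re R) X) (map_mx (@complex.Im R) X).

Definition has_singular_submx m p (bound : nat) (M : 'M[R]_(m, p)) : Prop :=
  exists n : nat, (n <= bound)%N /\
    exists (f : 'I_n -> 'I_m) (g : 'I_n -> 'I_p),
      injective f /\ injective g /\ \det (mxsub f g M) = 0.

Definition N_U NI S (Z0 : R) (Hr : 'M[C]_(S, NI)) (U : 'M[C]_(NI, S)) : Prop :=
  U_fully Z0 Hr U /\ has_singular_submx (S + S) (M_U Z0 Hr U).

Definition Hset NI NT S (Hd : 'M[C]_(S, NT)) (G : 'M[C]_(NI, NT))
  (P : 'M[C]_(NI, S) -> Prop) (H : 'M[C]_(S, NT)) : Prop :=
  exists U, P U /\ H = Hd + conjT U *m G.

End RISDefs.

(* Main.v *)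
Require Import Defs.
From HB Require Import structures.
From mathcomp Require Import all_boot all_order all_fingroup all_algebra.
From mathcomp Require Import reals.
From mathcomp.real_closed Require Import complex.
From mathcomp Require Import zify.
From Stdlib Require Import Classical.
Import Order.TTheory GRing.Theory Num.Theory.
Local Open Scope ring_scope.

Lemma card_higher n (i : 'I_n) : #|[set j : 'I_n | (i < j)%N]| = (n - i.+1)%N.
Proof.
rewrite -sum1dep_card -(big_mkord (fun j => i < j)%N (fun _ => 1%N)).
rewrite (big_cat_nat _ (n:=i.+1)) //= ?ltn_ord //.
rewrite big_nat_cond big1 ?add0n; last first.
  by move=> j /andP[/andP[_ h1] h2]; move: h2; rewrite ltnNge -ltnS h1.
rewrite big_nat_cond (eq_bigl (fun j => (i.+1 <= j < n)%N && true)); last first.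
  by move=> j; rewrite andbT; case: (i < j < n)%N /andP => //= -[->].
by rewrite -big_nat_cond sum_nat_const_nat muln1.
Qed.

Lemma complete_higher n (e : rel 'I_n) (i : 'I_n) :
  #|[set j : 'I_n | (i < j)%N && e i j]| = (n - i.+1)%N ->
  forall j : 'I_n, (i < j)%N -> e i j.
Proof.
move=> H j ij.
have sub : [set j : 'I_n | (i < j)%N && e i j] \subset [set j : 'I_n | (i < j)%N].
  by apply/subsetP => k; rewrite !inE => /andP[].
have := subset_cardP (etrans H (esym (@card_higher n i))) sub j.
by rewrite !inE ij /= => ->.
Qed.

Lemma complete_all n (e : rel 'I_n) : symmetric e ->
  (forall i : 'I_n, #|[set j : 'I_n | (i < j)%N && e i j]| = (n - i.+1)%N) ->
  forall i j : 'I_n, i != j -> e i j.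
Proof.
move=> se H i j; case: (ltngtP i j) => [ij|ji|/val_inj->]; last by rewrite eqxx.
- by move=> _; apply: complete_higher.
- by move=> _; rewrite se; apply: complete_higher.
Qed.

Lemma tr11 (R : realType) (a : 'M[R]_1) : a^T = a.
Proof. by apply/matrixP => i j; rewrite !ord1 mxE. Qed.

Lemma kind (R : realType) (q : nat) : forall n (M Y : 'M[R]_(n, q.+1)) (e : rel 'I_n),
  (q < n)%N -> symmetric e ->
  (forall i : 'I_n, #|[set j : 'I_n | (i < j)%N && e i j]| = minn q (n - i.+1)) ->
  (forall f : 'I_q.+1 -> 'I_n, injective f -> \det (mxsub f id M) != 0) ->
  (M^T *m Y)^T = M^T *m Y ->
  exists B : 'M[R]_n, B^T = B /\ in_BG e B /\ B *m M = Y.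
Proof.
elim=> [|n IH] M Y e Hqn se Hc Hns Hs //.
case: (ltngtP q n) => [qn|nq|qn]; first last.
- subst q.
  have uM : M \in unitmx.
    by rewrite unitmxE unitfE; have := Hns id (@inj_id _); rewrite mxsub_id.
  exists (Y *m invmx M); split; last split.
  + rewrite trmx_mul trmx_inv.
    have HY : Y^T = M^T *m Y *m invmx M by rewrite -Hs trmx_mul trmxK mulmxK.
    by rewrite HY -!mulmxA mulKmx ?unitmx_tr.
  + move=> i j ij; rewrite (@complete_all _ _ se _ i j ij) // => k.
    by rewrite Hc subSS; apply/minn_idPr; apply: leq_subr.
  + by rewrite mulmxKV.
- by rewrite ltnS leqNgt nq in Hqn.

move: qn => {Hqn} qn.
set S0 := [set j : 'I_n.+1 | (@ord0 n < j)%N && e ord0 j].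
have cS0 : #|S0| = q.
  by rewrite Hc subn1 /=; apply/minn_idPl; apply: ltnW.
pose g (k : 'I_q) : 'I_n.+1 := enum_val (cast_ord (esym cS0) k).
have gS k : g k \in S0 by apply: enum_valP.
have ginj : injective g by move=> a b /enum_val_inj /cast_ord_inj.
pose f (k : 'I_q.+1) : 'I_n.+1 := if unlift ord0 k is Some k' then g k' else ord0.
have g0 k : g k != ord0.
  by apply/eqP => h; have := gS k; rewrite h inE ltnn.
have finj : injective f.
  rewrite /f => a b; case: unliftP => [a'|] ->; case: unliftP => [b'|] -> //.
  - by move/ginj->.
  - by move=> h; have := g0 a'; rewrite h eqxx.
  - by move=> h; have := g0 b'; rewrite -h eqxx.
have uF : mxsub f id M \in unitmx by rewrite unitmxE unitfE Hns.
pose r : 'rV[R]_(1 + n) := usubmx (Y : 'M_(1 + n, _)) *m invmx (mxsub f id M) *m mxsub f id 1%:M.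
have rM : r *m M = usubmx (Y : 'M_(1 + n, _)) by rewrite -mulmxA -rowsubE mulmxKV.
have rz j : (forall k, f k != j) -> r 0 j = 0.
  move=> hj; rewrite mxE big1 // => k _; rewrite !mxE (negbTE (hj k)) /=.
  by rewrite mulr0.
have rz' (j : 'I_n.+1) : (0 < j)%N -> ~~ e ord0 j -> r 0 j = 0.
  move=> j0 nej; apply: rz => k; rewrite /f; case: unliftP => [k'|] _.
  - by apply/eqP => h; have := gS k'; rewrite h inE j0 (negbTE nej).
  - by apply/eqP => h; rewrite -h in j0.
set m0 := usubmx (M : 'M_(1 + n, _)).
set M' := dsubmx (M : 'M_(1 + n, _)).
set y0 := usubmx (Y : 'M_(1 + n, _)).
set Y1 := dsubmx (Y : 'M_(1 + n, _)).
set a0 := lsubmx r.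
set r' := rsubmx r.
pose e' : rel 'I_n := fun a b => e (rshift 1 a) (rshift 1 b).
have HrM : a0 *m m0 + r' *m M' = y0.
  by rewrite -mul_row_col hsubmxK vsubmxK.
have HMY : M^T *m Y = m0^T *m y0 + M'^T *m Y1.
  by rewrite -{1}(vsubmxK (M : 'M_(1 + n, _))) -{1}(vsubmxK (Y : 'M_(1 + n, _))) (@tr_col_mx _ 1 n) (@mul_row_col _ _ 1 n).
have [B' [sB' [gB' BM']]] : exists B' : 'M[R]_n, B'^T = B' /\ in_BG e' B' /\ B' *m M' = Y1 - r'^T *m m0.
  apply: IH => //.
- by move=> a b; apply: se.
- move=> a; have := Hc (rshift 1 a); rewrite /= subSS => <-.
  rewrite -(card_imset _ (@rshift_inj 1 n)); apply: eq_card => j.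
  rewrite inE; case: (split_ordP (j : 'I_(1 + n))) => k ->.
  + rewrite /= ord1 ltn0 /=; apply/negbTE/imsetP => -[x _ /eqP].
    by rewrite eq_lrshift.
  + rewrite mem_imset; last exact: rshift_inj.
    by rewrite !inE /=.
- move=> f' f'inj.
  have -> : mxsub f' id M' = mxsub (fun k => rshift 1 (f' k) : 'I_n.+1) id M.
    by apply/matrixP => a b; rewrite !mxE.
  by apply: Hns => a b /(@rshift_inj 1 n) /f'inj.
- set P := M'^T *m Y1; set T := m0^T *m (r' *m M').
  have E1 : M'^T *m (r'^T *m m0) = T^T by rewrite /T !trmx_mul trmxK mulmxA.
  have K : (m0^T *m a0 *m m0)^T = m0^T *m a0 *m m0 by rewrite !trmx_mul trmxK tr11 mulmxA.
  have E2 : m0^T *m y0 = m0^T *m a0 *m m0 + T by rewrite -HrM mulmxDr mulmxA.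
  have E : T^T + P^T = T + P.
    by move: Hs; rewrite HMY E2 !raddfD /= K -!addrA => /addrI.
  rewrite mulmxBr E1 -/P raddfB /= trmxK.
  have -> : P^T = T + P - T^T by rewrite -E addrC addKr.
  by rewrite addrC !addrA addNr add0r.
have l0 : lshift n (0 : 'I_1) = ord0 :> 'I_n.+1 by apply: val_inj.
exists (block_mx a0 r' r'^T B' : 'M_(1 + n)); split; last split.
- by rewrite (@tr_block_mx _ 1 n 1 n) trmxK sB' tr11.
- move=> i j; case: (split_ordP (i : 'I_(1+n))) => a ->; case: (split_ordP (j : 'I_(1+n))) => b ->.
  + by rewrite !ord1 eqxx.
  + rewrite ord1 (@block_mxEur _ 1 n 1 n) mxE l0 => _ nij.
    by apply: rz'.
  + rewrite ord1 (@block_mxEdl _ 1 n 1 n) mxE mxE l0 se => _ nij.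
    by apply: rz'.
  + move=> ij nij; rewrite (@block_mxEdr _ 1 n 1 n); apply: (gB' a b _ nij).
    by apply: contraNneq ij => ->.
- rewrite -[in LHS](vsubmxK (M : 'M_(1 + n, _))) (@mul_block_col _ 1 n 1 n) -/m0 -/M' HrM BM'.
  by rewrite addrC subrK vsubmxK.
Qed.


Lemma klem (R : realType) n p (M : 'M[R]_(n, p)) (B0 : 'M[R]_n) (e : rel 'I_n) :
  (0 < p)%N -> symmetric e -> B0^T = B0 ->
  (forall i : 'I_n, #|[set j : 'I_n | (i < j)%N && e i j]| = minn (minn p n).-1 (n - i.+1)) ->
  ((p <= n)%N -> forall f : 'I_p -> 'I_n, injective f -> \det (mxsub f id M) != 0) ->
  exists B : 'M[R]_n, B^T = B /\ in_BG e B /\ B *m M = B0 *m M.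
Proof.
case: p M => [//|q] M _ se sB0 Hc Hns.
case: (ltnP q n) => qn.
- apply: (@kind R q n M (B0 *m M) e qn se) => //.
  + by move=> i; rewrite Hc; congr minn; lia.
  + by apply: Hns.
  + by rewrite !trmx_mul trmxK sB0 mulmxA.
- exists B0; split => //; split => // i j ij.
  rewrite (@complete_all _ _ se _ i j ij) // => k.
  rewrite Hc; have := ltn_ord k; lia.
Qed.

Lemma perm_mxV1 (R : realType) n (s : 'S_n) : perm_mx s *m perm_mx (s^-1)%g = 1%:M :> 'M[R]_n.
Proof. by rewrite -perm_mxM mulgV perm_mx1. Qed.

Lemma kperm (R : realType) NI p (M : 'M[R]_(NI,p)) (B0 : 'M[R]_NI) (e : rel 'I_NI) :
  (0 < p)%N -> symmetric e -> B0^T = B0 ->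
  (exists (s : 'S_NI) (Abar : 'M[R]_NI),
      adjmx R e = perm_mx s *m Abar *m (perm_mx s)^T /\
      forall n : 'I_NI, (n.+1 <= NI - 1)%N ->
        \sum_(m : 'I_NI | (n < m)%N) Abar n m = (minn (minn p NI).-1 (NI - n.+1))%:R) ->
  ((p <= NI)%N -> forall f : 'I_p -> 'I_NI, injective f -> \det (mxsub f id M) != 0) ->
  exists B : 'M[R]_NI, B^T = B /\ in_BG e B /\ B *m M = B0 *m M.
Proof.
move=> p0 se sB0 [s [Ab [HA Hsum]]] Hns.
have HAb a b : Ab a b = (e ((s^-1)%g a) ((s^-1)%g b))%:R.
  have := congr1 (fun A : 'M[R]_NI => A ((s^-1)%g a) ((s^-1)%g b)) HA.
  by rewrite /adjmx tr_perm_mx -row_permE -col_permE !mxE !permKV => ->.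
have sB0e i j : B0 j i = B0 i j.
  by have := congr1 (fun A : 'M[R]_NI => A i j) sB0; rewrite mxE.
pose e' : rel 'I_NI := fun a b => e ((s^-1)%g a) ((s^-1)%g b).
have [B' [sB' [gB' BM']]] : exists B' : 'M[R]_NI, B'^T = B' /\ in_BG e' B' /\
   B' *m row_perm (s^-1)%g M = col_perm (s^-1)%g (row_perm (s^-1)%g B0) *m row_perm (s^-1)%g M.
  apply: klem => //.
- by move=> a b; apply: se.
- by apply/matrixP => a b; rewrite !mxE sB0e.
- move=> i; case: (ltnP i.+1 NI) => hi.
  + have Hi := Hsum i ltac:(lia).
    have HS : \sum_(m : 'I_NI | (i < m)%N) Ab i m = (\sum_(m : 'I_NI | (i < m)%N) (e' i m : nat))%:R.
      by rewrite natr_sum; apply: eq_bigr => m _; rewrite HAb.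
    move/eqP: Hi; rewrite HS eqr_nat => /eqP <-.
    rewrite -sum1dep_card big_mkcondr /=; apply: eq_bigr => m _.
    by case: (e' i m).
  + have -> : (NI - i.+1 = 0)%N by lia.
    rewrite minn0; apply/eqP; rewrite cards_eq0; apply/eqP/setP => j; rewrite !inE.
    by have := ltn_ord j; case: (ltnP i j) => //= ij; lia.
- move=> pn f finj; have -> : mxsub f id (row_perm (s^-1)%g M) = mxsub (fun k => (s^-1)%g (f k)) id M.
    by apply/matrixP => a b; rewrite !mxE.
  by apply: Hns => // a b /perm_inj /finj.
exists (col_perm s (row_perm s B')); split; last split.
- apply/matrixP => a b; rewrite !mxE.
  by have := congr1 (fun A : 'M[R]_NI => A (s a) (s b)) sB'; rewrite mxE.
- move=> i j ij nij; rewrite !mxE; apply: gB'.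
  + by rewrite (inj_eq perm_inj).
  + by rewrite /e' !permK.
- move: BM'; rewrite !row_permE !col_permE invgK => BM'.
  by rewrite -!mulmxA BM' !mulmxA perm_mxV1 mul1mx -!mulmxA [perm_mx s *m _]mulmxA perm_mxV1 mul1mx.
Qed.

Lemma cplxM (R : realType) m n p (A : 'M[R]_(m, n)) (B : 'M[R]_(n, p)) :
  cplx_mx (A *m B) = cplx_mx A *m cplx_mx B.
Proof. exact: map_mxM. Qed.
Lemma cplxD (R : realType) m n (A B : 'M[R]_(m, n)) : cplx_mx (A + B) = cplx_mx A + cplx_mx B.
Proof. exact: map_mxD. Qed.
Lemma cplxB (R : realType) m n (A B : 'M[R]_(m, n)) : cplx_mx (A - B) = cplx_mx A - cplx_mx B.
Proof. exact: map_mxB. Qed.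
Lemma cplx1 (R : realType) n : cplx_mx (1%:M : 'M[R]_n) = 1%:M.
Proof. exact: map_mx1. Qed.
Lemma cplxZ (R : realType) m n (a : R) (A : 'M[R]_(m, n)) : cplx_mx (a *: A) = a%:C%C *: cplx_mx A.
Proof. exact: map_mxZ. Qed.
Lemma conjTD (R : realType) m n (A B : 'M[R[i]]_(m, n)) : conjT (A + B) = conjT A + conjT B.
Proof. by rewrite /conjT map_mxD raddfD. Qed.
Lemma conjTM (R : realType) m n p (A : 'M[R[i]]_(m, n)) (B : 'M[R[i]]_(n, p)) :
  conjT (A *m B) = conjT B *m conjT A.
Proof. by rewrite /conjT map_mxM trmx_mul. Qed.
Lemma conjTK (R : realType) m n (A : 'M[R[i]]_(m, n)) : conjT (conjT A) = A.
Proof. by apply/matrixP => i j; rewrite !mxE conjcK. Qed.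
Lemma conjT_cplx (R : realType) m n (A : 'M[R]_(m, n)) : conjT (cplx_mx A) = cplx_mx A^T.
Proof. by apply/matrixP => i j; rewrite !mxE conjc_real. Qed.

Lemma reim (R : realType) m n p (x : 'M[R]_(m, n)) (W : 'M[R[i]]_(n, p)) :
  x *m map_mx (@complex.Re R) W = 0 -> x *m map_mx (@complex.Im R) W = 0 ->
  cplx_mx x *m W = 0.
Proof.
move=> h1 h2; apply/matrixP => i k.
have := congr1 (fun A : 'M[R]_(m,p) => A i k) h1.
have := congr1 (fun A : 'M[R]_(m,p) => A i k) h2.
rewrite !mxE /= => e2 e1.
have HRe : forall (y : R) (w : R[i]), complex.Re (y%:C%C * w) = y * complex.Re w.
  by move=> y [a b] /=; rewrite mul0r subr0.
have HIm : forall (y : R) (w : R[i]), complex.Im (y%:C%C * w) = y * complex.Im w.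
  by move=> y [a b] /=; rewrite mul0r addr0.
apply/eqP; rewrite eq_complex /=; apply/andP; split; apply/eqP.
- rewrite (@raddf_sum _ _ (@complex.Re R)).
  by rewrite -[RHS]e1; apply: eq_bigr => j _; rewrite !mxE; case: (W j k) => a b /=; rewrite mul0r subr0.
- rewrite (@raddf_sum _ _ (@complex.Im R)).
  by rewrite -[RHS]e2; apply: eq_bigr => j _; rewrite !mxE; case: (W j k) => a b /=; rewrite mul0r addr0.
Qed.

Lemma onepm (K : comRingType) n (X : 'M[K]_n) :
  (1%:M + X) *m (1%:M - X) = 1%:M - X *m X /\ (1%:M - X) *m (1%:M + X) = 1%:M - X *m X.
Proof.
split; rewrite ?mulmxDl ?mulmxDr ?mulNmx ?mulmxN ?mul1mx ?mulmx1.
- by rewrite addrA subrK.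
- by rewrite addrA addrK.
Qed.

Lemma unitP (R : realType) NI (Z0 : R) (B : 'M[R]_NI) : B^T = B ->
  (1%:M + ('i%C * Z0%:C%C) *: cplx_mx B) \in unitmx.
Proof.
move=> sB.
set C : 'M[R]_NI := 1%:M + (Z0 ^+ 2) *: (B *m B).
have sq (u : 'rV[R]_NI) : (u *m u^T) 0 0 = \sum_j u 0 j ^+ 2.
  by rewrite mxE; apply: eq_bigr => j _; rewrite mxE expr2.
have sq0 (u : 'rV[R]_NI) : 0 <= (u *m u^T) 0 0.
  by rewrite sq sumr_ge0 // => j _; apply: sqr_ge0.
have uC : C \in unitmx.
  rewrite unitmxE unitfE; apply/negP => /det0P [v nv vC].
  have E : v *m v^T + Z0 ^+ 2 *: ((v *m B) *m (v *m B)^T) = 0.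
    have : v *m C *m v^T = 0 by rewrite vC mul0mx.
    by rewrite /C mulmxDr mulmx1 -scalemxAr mulmxDl -scalemxAl trmx_mul sB !mulmxA.
  have a0 := sq0 v; have b0 := sq0 (v *m B); have av := sq v.
  move: E a0 b0 av.
  set a := v *m v^T; set b := (v *m B) *m (v *m B)^T; clearbody a b => E a0 b0 av.
  have := congr1 (fun A : 'M[R]_1 => A 0 0) E; rewrite !mxE /= => /eqP.
  rewrite paddr_eq0 //; last exact: mulr_ge0 (sqr_ge0 _) b0.
  case/andP => /eqP.
  rewrite av => /psumr_eq0P h _; move/eqP: nv; apply; apply/rowP => j.
  rewrite mxE; apply/eqP; rewrite -sqrf_eq0; apply/eqP; apply: h => // i _; exact: sqr_ge0.
have PQ := (@onepm _ _ (('i%C * Z0%:C%C) *: cplx_mx B)).1.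
have HC : 1%:M - ('i%C * Z0%:C%C) *: cplx_mx B *m (('i%C * Z0%:C%C) *: cplx_mx B) = cplx_mx C.
  rewrite /C cplxD cplx1 cplxZ cplxM -scalemxAl -scalemxAr scalerA.
  congr (_ + _); rewrite -scaleNr; congr (_ *: _).
  by rewrite rmorphXn /= mulrACA -expr2 sqr_i mulN1r opprK expr2.
have := @mulmx1_unit _ _ (1%:M + ('i%C * Z0%:C%C) *: cplx_mx B) ((1%:M - ('i%C * Z0%:C%C) *: cplx_mx B) *m cplx_mx (invmx C)).
case => //.
by rewrite mulmxA PQ HC -cplxM mulmxV // cplx1.
Qed.

Lemma ThetaE (R : realType) NI (Z0 : R) (B : 'M[R]_NI) : B^T = B ->
  Theta Z0 B = (1%:M - ('i%C * Z0%:C%C) *: cplx_mx B) *m invmx (1%:M + ('i%C * Z0%:C%C) *: cplx_mx B).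
Proof.
move=> sB; have uP := @unitP _ _ Z0 B sB.
have [h1 h2] := @onepm _ _ (('i%C * Z0%:C%C) *: cplx_mx B).
rewrite /Theta.
set P := 1%:M + _; set Q := 1%:M - _.
have e : invmx P *m Q *m P = Q by rewrite -mulmxA h2 -h1 mulmxA mulVmx // mul1mx.
by rewrite -{2}e mulmxK.
Qed.

Lemma Ueq (R : realType) NI S (Z0 : R) (Hr : 'M[R[i]]_(S, NI)) (B0 B : 'M[R]_NI)
  (X0 : 'M[R[i]]_(S, NI)) :
  Z0 != 0 -> B0^T = B0 -> B^T = B -> X0 = Hr *m Theta Z0 B0 ->
  (B - B0) *m M_U Z0 Hr (conjT X0) = 0 ->
  Hr *m Theta Z0 B = X0.
Proof.
move=> Z0n sB0 sB EX0 H.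
have an : ('i%C * Z0%:C%C) != 0 :> R[i].
  rewrite mulf_neq0 //; first by rewrite eq_complex /= oner_eq0 andbF.
  by rewrite eq_complex /= eqxx andbT.
set a := ('i%C * Z0%:C%C) in an H *.
have hW : cplx_mx (B - B0) *m (a *: (conjT Hr + conjT X0)) = 0.
  move: H; rewrite /M_U /= mul_mx_row => /eqP; rewrite row_mx_eq0 => /andP[/eqP h1 /eqP h2].
  exact: reim h1 h2.
have hZ : (Hr + X0) *m cplx_mx (B - B0) = 0.
  move: hW; rewrite -conjTD -scalemxAr => /eqP; rewrite scaler_eq0 (negbTE an) /= => /eqP.
  move/(congr1 (@conjT R _ _)); rewrite conjTM conjTK conjT_cplx raddfB /= sB sB0 => ->.
  by apply/matrixP => i j; rewrite !mxE conjc0.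
have uP := @unitP _ _ Z0 B sB; have uP0 := @unitP _ _ Z0 B0 sB0.
have hX0 : X0 *m (1%:M + a *: cplx_mx B0) = Hr *m (1%:M - a *: cplx_mx B0).
  by rewrite EX0 (@ThetaE _ _ Z0 B0 sB0) -/a -!mulmxA mulVmx // mulmx1.
rewrite (@ThetaE _ _ Z0 B sB) -/a mulmxA; apply: (canLR (mulmxK uP)).
move: hX0 hZ; rewrite ?mulmxDr ?mulmxBr ?mulmx1 ?mulmxDl ?cplxB ?mulmxBr ?mulmxN -?scalemxAr -/a.
set u := X0 *m cplx_mx B; set u0 := X0 *m cplx_mx B0.
set h := Hr *m cplx_mx B; set h0 := Hr *m cplx_mx B0.
move=> /(canRL (addrK (a *: u0))) -> hZ; apply/esym.
have hZ' : u - u0 = h0 - h.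
  by apply/eqP; rewrite -subr_eq0 opprB addrC hZ.
rewrite -!addrA; congr (Hr + _).
rewrite -!scalerN -!scalerDr; congr (a *: _).
by rewrite [- u0 + u]addrC hZ' addKr.
Qed.

Theorem theorem2 (R : realType) (NI NT K : nat) (N : 'I_K -> nat) (Z0 : R)
    (Hdk : forall k : 'I_K, 'M[R[i]]_(N k, NT))
    (Hrk : forall k : 'I_K, 'M[R[i]]_(N k, NI))
    (G : 'M[R[i]]_(NI, NT))
    (e : rel 'I_NI) :
  (0 < NI)%N -> (0 < NT)%N -> (0 < K)%N -> (forall k, 0 < N k)%N -> 0 < Z0 ->
  (* D = min(sum_k N_k, N_T) equals sum_k N_k *)
  (\sum_(k < K) N k <= NT)%N ->
  (* e is a simple undirected graph on V_1..V_{N_I} *)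
  symmetric e -> irreflexive e ->
  (* 2L = min(2D, N_I), with D = sum_k N_k and L = min(D, N_I/2) *)
  (exists (s : 'S_NI) (Abar : 'M[R]_NI),
      adjmx R e = perm_mx s *m Abar *m (perm_mx s)^T /\
      forall n : 'I_NI, (n.+1 <= NI - 1)%N ->
        \sum_(m : 'I_NI | (n < m)%N) Abar n m
          = (minn (minn (2 * \sum_(k < K) N k) NI).-1 (NI - n.+1))%:R) ->
  let S := (\sum_(k < K) N k)%N in
  let Hd := stack Hdk in
  let Hr := stack Hrk in
  (forall U : 'M[R[i]]_(NI, S),
     U_fully Z0 Hr U <-> U_G e Z0 Hr U \/ N_U Z0 Hr U) /\
  (forall H : 'M[R[i]]_(S, NT),
     Hset Hd G (U_fully Z0 Hr) H <->
       Hset Hd G (U_G e Z0 Hr) H \/ Hset Hd G (N_U Z0 Hr) H).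
Proof.
move=> NI0 NT0 K0 Nk0 Z0p HD se ie Hg S Hd Hr.
have p0 : (0 < S + S)%N.
  have : (0 < S)%N.
    rewrite /S (bigD1 (Ordinal K0)) //=; have := Nk0 (Ordinal K0); lia.
  lia.
move: Hg; rewrite mul2n -addnn => Hg.
have Z0n : Z0 != 0 by rewrite gt_eqF.
have part1 : forall U : 'M[R[i]]_(NI, S),
    U_fully Z0 Hr U <-> U_G e Z0 Hr U \/ N_U Z0 Hr U.
  move=> U; split.
  - case=> B0 [sB0 EU].
    case: (classic (has_singular_submx (S + S) (M_U Z0 Hr U))) => hs.
      right; split; last exact: hs.
      by exists B0; split; [exact: sB0 | exact: EU].
    left.
    have Hns : (S + S <= NI)%N -> forall f : 'I_(S + S) -> 'I_NI, injective f ->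
        \det (mxsub f id (M_U Z0 Hr U)) != 0.
      move=> _ f finj; apply/eqP => hd; apply: hs; exists (S + S); split; first exact: leqnn.
      exists f, id; split; first exact: finj.
      split; first exact: inj_id.
      exact: hd.
    have [B [sB [gB BM]]] := @kperm R NI (S + S) (M_U Z0 Hr U) B0 e p0 se sB0 Hg Hns.
    exists B; split; first exact: sB.
    split; first exact: gB.
    have HB : (B - B0) *m M_U Z0 Hr (conjT (Hr *m Theta Z0 B0)) = 0.
      by rewrite -EU mulmxBl BM subrr.
    by rewrite EU (@Ueq R NI S Z0 Hr B0 B (Hr *m Theta Z0 B0)).
  - case => [[B [sB [_ ->]]] | [hU _]]; last exact: hU.
    by exists B.
split; first exact: part1.
move=> H; split.
- case=> U [hU ->]; case: ((part1 U).1 hU) => h; [left|right]; by exists U.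
- case => [[U [hU ->]]|[U [hU ->]]]; exists U; (split; last reflexivity); apply/(part1 U).2; by [left|right].
Qed.
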